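(* Let $s:\mathbb C_+\to\mathbb C_+$ be continuous and set $R(z)=s(z)^2+s(z)z+1$. For $E\in\mathbb R$, $\eta_0>0$ and $\eta_1\ge3\vee\eta_0$, suppose that there is a nonincreasing continuous function $r:[\eta_0,\eta_1]\to[0,1]$ such that $|R(E+\mathrm i\eta)|\le(1+|E+\mathrm i\eta|)\,r(\eta)$ for all $\eta\in[\eta_0,\eta_1]$. Then for all $z=E+\mathrm i\eta$ with $\eta\in[\eta_0,\eta_1]$ we have \[|s(z)-m(z)|=O\big(F_z(r(\eta))\big).\]
   Context: $\mathbb C_+$ is the open upper half-plane. $m(z)=\frac{-z+\sqrt{z^2-4}}2$ with the branch chosen so that $m(z)\in\mathbb C_+$ for $z\in\mathbb C_+$ (equivalently, branch cut $[-2,2]$ and $\sqrt{z^2-4}\sim z$ as $|z|\to\infty$). For $r\in[0,1]$, $F_z(r)=[(1+|z^2-4|^{-1/2})r]\wedge\sqrt r$. $O(\cdot)$ denotes a bound with an absolute constant. *)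

(* Defs.v *)
From Stdlib Require Import Reals.
From Coquelicot Require Export Coquelicot.
Open Scope R_scope.

(* Principal square root on C: Re >= 0, branch cut on (-oo,0],
   with values on the cut taken with Im >= 0. *)
Definition Csqrt_p (w : C) : C :=
  (sqrt ((Cmod w + Re w) / 2),
   (if Rlt_dec (Im w) 0 then -1 else 1) * sqrt ((Cmod w - Re w) / 2)).

(* sqrt(z^2-4) with branch cut [-2,2] and sqrt(z^2-4) ~ z at infinity,
   realised as sqrt_p(z-2) * sqrt_p(z+2). *)
Definition sqrt_z2m4 (z : C) : C :=
  Cmult (Csqrt_p (Cminus z (RtoC 2))) (Csqrt_p (Cplus z (RtoC 2))).

(* Stieltjes transform of the semicircle law. *)
Definition m_sc (z : C) : C :=
  Cdiv (Cplus (Copp z) (sqrt_z2m4 z)) (RtoC 2).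

Definition F_z (z : C) (r : R) : R :=
  Rmin ((1 + / sqrt (Cmod (Cminus (Cmult z z) (RtoC 4)))) * r) (sqrt r).

(* Main.v *)
Require Import Defs.
From Stdlib Require Import Reals Lra Psatz.
From Coquelicot Require Import Coquelicot.
Open Scope R_scope.

Definition sq1 (c t : R) := sqrt ((sqrt (c^2 + t^2) + c)/2).
Definition sq2 (c t : R) := sqrt ((sqrt (c^2 + t^2) - c)/2).

Lemma sq_props c t : 0 < t ->
  0 <= sq1 c t /\ 0 <= sq2 c t /\ sq1 c t * sq1 c t - sq2 c t * sq2 c t = c
  /\ 2 * sq1 c t * sq2 c t = t.
Proof.
  intros Ht. unfold sq1, sq2. set (S := sqrt (c^2+t^2)).
  assert (HS2 : S * S = c^2 + t^2) by (apply sqrt_sqrt; nra).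
  assert (HS0 : 0 <= S) by apply sqrt_pos.
  assert (HSc : Rabs c <= S).
  { rewrite <- sqrt_Rsqr_abs. apply sqrt_le_1; unfold Rsqr; nra. }
  apply Rabs_le_between in HSc.
  assert (H1 : 0 <= (S + c)/2) by lra.
  assert (H2 : 0 <= (S - c)/2) by lra.
  split; [apply sqrt_pos|]. split; [apply sqrt_pos|].
  split.
  - rewrite !sqrt_sqrt by lra. lra.
  - rewrite Rmult_assoc, <- sqrt_mult by lra.
    replace ((S + c) / 2 * ((S - c) / 2)) with ((t/2)*(t/2)) by (field_simplify; nra).
    rewrite sqrt_square by lra. lra.
Qed.

Lemma Csqrt_p_eq c t : 0 <= t -> Csqrt_p (c,t) = (sq1 c t, sq2 c t).
Proof.
  intros Ht. unfold Csqrt_p, Cmod, sq1, sq2; simpl.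
  destruct (Rlt_dec t 0); [lra|]. rewrite Rmult_1_l. reflexivity.
Qed.

Definition W1 E t := sq1 (E-2) t * sq1 (E+2) t - sq2 (E-2) t * sq2 (E+2) t.
Definition W2 E t := sq1 (E-2) t * sq2 (E+2) t + sq2 (E-2) t * sq1 (E+2) t.

Lemma m_sc_eq E t : 0 <= t -> m_sc (E,t) = ((-E + W1 E t)/2, (-t + W2 E t)/2).
Proof.
  intros Ht. unfold m_sc, sqrt_z2m4.
  replace (Cminus (E,t) (RtoC 2)) with ((E-2,t):C)
    by (unfold Cminus, Cplus, Copp, RtoC; simpl; f_equal; ring).
  replace (Cplus (E,t) (RtoC 2)) with ((E+2,t):C)
    by (unfold Cminus, Cplus, Copp, RtoC; simpl; f_equal; ring).
  rewrite !Csqrt_p_eq by lra.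
  unfold W1, W2, Cdiv, Cmult, Cinv, Cplus, Copp, RtoC; simpl. f_equal; field.
Qed.

Lemma W_props E t : 0 < t ->
  W1 E t * W1 E t - W2 E t * W2 E t = E*E - t*t - 4 /\
  W1 E t * W2 E t = E * t /\ t <= W2 E t.
Proof.
  intros Ht. unfold W1, W2.
  destruct (sq_props (E-2) t Ht) as [A1 [B1 [C1 D1]]].
  destruct (sq_props (E+2) t Ht) as [A2 [B2 [C2 D2]]].
  set (x1 := sq1 (E-2) t) in *. set (y1 := sq2 (E-2) t) in *.
  set (x2 := sq1 (E+2) t) in *. set (y2 := sq2 (E+2) t) in *.
  split; [|split].
  - replace ((x1 * x2 - y1 * y2) * (x1 * x2 - y1 * y2) - (x1 * y2 + y1 * x2) * (x1 * y2 + y1 * x2))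
      with ((x1*x1-y1*y1)*(x2*x2-y2*y2) - (2*x1*y1)*(2*x2*y2)) by ring.
    rewrite C1, C2, D1, D2. ring.
  - replace ((x1 * x2 - y1 * y2) * (x1 * y2 + y1 * x2))
      with ((x1*x1-y1*y1)*(2*x2*y2)/2 + (2*x1*y1)*(x2*x2-y2*y2)/2) by field.
    rewrite C1, C2, D1, D2. field.
  - assert (Hx1 : 0 < x1) by nra.
    assert (Hx2 : 0 < x2) by nra.
    assert (Hxy : x1 * y1 = x2 * y2) by lra.
    assert (Hord : x1 <= x2 /\ y2 <= y1).
    { destruct (Rle_lt_dec x1 x2) as [H|H].
      - split; [lra|]. nra.
      - exfalso. assert (0 < y1) by nra. assert (x2*y1 < x1*y1) by nra. assert (y1 < y2) by nra. assert (0 <= y1) by lra. assert (x2*x2 < x1*x1) by nra. assert (y1*y1 < y2*y2) by nra. lra. }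
    nra.
Qed.

Definition Mx E t : C := ((-E + W1 E t)/2, (-t + W2 E t)/2).
Definition Mx' E t : C := ((-E - W1 E t)/2, (-t - W2 E t)/2).
Definition Dv E t := sqrt (Cmod (Cminus (Cmult (E,t) (E,t)) (RtoC 4))).

Lemma Cmod_Im_le (x : C) : Rabs (snd x) <= Cmod x.
Proof.
  unfold Cmod. rewrite <- sqrt_Rsqr_abs. apply sqrt_le_1; unfold Rsqr; nra.
Qed.

Lemma point_facts (u : C) E t : 0 < t ->
  Cmod (Cplus (Cplus (Cmult u u) (Cmult u (E,t))) (RtoC 1))
    = Cmod (Cminus u (Mx E t)) * Cmod (Cminus u (Mx' E t)) /\
  Dv E t <= Cmod (Cminus u (Mx E t)) + Cmod (Cminus u (Mx' E t)) /\
  Cmod (Cminus u (Mx E t)) <= Cmod (Cminus u (Mx' E t)) + Dv E t /\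
  (0 < snd u -> t < Cmod (Cminus u (Mx' E t))).
Proof.
  intros Ht. destruct (W_props E t Ht) as [P1 [P2 P3]].
  destruct u as [u1 u2].
  set (w := (W1 E t, W2 E t) : C).
  assert (HD : Dv E t = Cmod w).
  { unfold Dv.
    replace (Cminus (Cmult (E,t) (E,t)) (RtoC 4)) with (Cmult w w).
    - rewrite Cmod_mult. apply sqrt_square. apply Cmod_ge_0.
    - unfold w, Cminus, Cmult, Cplus, Copp, RtoC; simpl.
      apply injective_projections; simpl; lra. }
  rewrite HD. split; [|split; [|split]].
  - rewrite <- Cmod_mult. f_equal.
    unfold Mx, Mx', Cminus, Cmult, Cplus, Copp, RtoC; simpl.
    apply injective_projections; simpl; lra.
  - replace w with (Cplus (Cminus (u1,u2) (Mx' E t)) (Copp (Cminus (u1,u2) (Mx E t)))).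
    + eapply Rle_trans; [apply Cmod_triangle|]. rewrite Cmod_opp. lra.
    + unfold w, Mx, Mx', Cminus, Cplus, Copp; simpl.
      apply injective_projections; simpl; field.
  - replace (Cminus (u1,u2) (Mx E t)) with (Cplus (Cminus (u1,u2) (Mx' E t)) (Copp w)).
    + eapply Rle_trans; [apply Cmod_triangle|]. rewrite Cmod_opp. lra.
    + unfold w, Mx, Mx', Cminus, Cplus, Copp; simpl.
      apply injective_projections; simpl; field.
  - simpl. intros Hu. eapply Rlt_le_trans; [|apply Cmod_Im_le].
    unfold Mx', Cminus, Cplus, Copp; simpl. rewrite Rabs_right; lra.
Qed.

Lemma Cmod_pair_mono E t1 t2 : 0 <= t1 <= t2 -> Cmod (E,t1) <= Cmod (E,t2).
Proof. intros H. unfold Cmod; simpl. apply sqrt_le_1; nra. Qed.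

Lemma Cmod_z24 E t :
  Cmod (Cminus (Cmult (E,t) (E,t)) (RtoC 4)) = Cmod (E-2,t) * Cmod (E+2,t).
Proof.
  rewrite <- Cmod_mult. f_equal. unfold Cminus, Cmult, Cplus, Copp, RtoC; simpl.
  apply injective_projections; simpl; ring.
Qed.

Lemma Dv_mono E t1 t2 : 0 <= t1 <= t2 -> Dv E t1 <= Dv E t2.
Proof.
  intros H. unfold Dv. apply sqrt_le_1.
  - apply Cmod_ge_0.
  - apply Cmod_ge_0.
  - rewrite !Cmod_z24. apply Rmult_le_compat; try apply Cmod_ge_0; apply Cmod_pair_mono; lra.
Qed.

Lemma Dv_pos E t : 0 < t -> 0 < Dv E t.
Proof.
  intros Ht. unfold Dv. apply sqrt_lt_R0. rewrite Cmod_z24.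
  assert (forall c, t <= Cmod (c,t)).
  { intros c. eapply Rle_trans; [|apply (Cmod_Im_le (c,t))]. simpl. rewrite Rabs_right; lra. }
  pose proof (H (E-2)). pose proof (H (E+2)). nra.
Qed.

Lemma rho_facts E t : 0 <= Dv E t /\
  Cmod (E,t) ^ 2 <= Dv E t ^ 2 + 4 /\ Cmod (E,t) ^ 2 - 4 <= Dv E t ^ 2.
Proof.
  assert (H2 : Dv E t ^ 2 = Cmod (Cminus (Cmult (E,t) (E,t)) (RtoC 4))).
  { unfold Dv. rewrite pow2_sqrt; [reflexivity|apply Cmod_ge_0]. }
  assert (H1 : Cmod (E,t) ^ 2 = Cmod (Cmult (E,t) (E,t))) by (rewrite Cmod_mult; ring).
  rewrite H1, H2.
  assert (H4 : Cmod (RtoC 4) = 4) by (rewrite Cmod_R; rewrite Rabs_right; lra).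
  assert (Hm : Cmod (Cmult (E,t) (E,t)) <= Cmod (Cminus (Cmult (E,t) (E,t)) (RtoC 4)) + 4).
  { replace (Cmult (E,t) (E,t)) with (Cplus (Cminus (Cmult (E,t) (E,t)) (RtoC 4)) (RtoC 4)) at 1.
    + eapply Rle_trans; [apply Cmod_triangle|]. lra.
    + unfold Cminus, Cplus, Copp, RtoC; simpl. apply injective_projections; simpl; ring. }
  split; [unfold Dv; apply sqrt_pos|]. lra.
Qed.

Lemma div_bound a D r k : 0 < D -> 0 <= r -> a * D <= k * (D + 1) * r -> a <= k * ((1 + / D) * r).
Proof.
  intros HD Hr H. apply Rmult_le_reg_r with D; [lra|].
  replace (k * ((1 + / D) * r) * D) with (k * (D + 1) * r) by (field; lra). lra.
Qed.

Lemma good_case a b D rho r : 0<=a -> 0<=b -> 0<D -> 0<=rho -> 0<=r<=1 ->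
  D <= a+b -> a*b <= (1+rho)*r -> a <= b -> rho^2 <= D^2+4 ->
  a <= 6*((1+/D)*r) /\ a*a <= 144*r.
Proof.
  intros Ha Hb HD Hrho Hr H1 H2 H3 H4.
  assert (Hrd : rho <= D + 2) by nra.
  assert (HaD : a * D <= 6 * (D+1) * r).
  { assert (a*D <= a*(a+b)) by nra. assert (a*a <= a*b) by nra. nra. }
  split.
  - apply div_bound; lra.
  - destruct (Rle_lt_dec 1 D).
    + assert (a <= 12 * r).
      { apply Rmult_le_reg_r with D; [lra|]. nra. }
      nra.
    + assert (a*a <= a*b) by nra. nra.
Qed.

Lemma switch_lemma a b D rho r : 0<=a -> 0<=D -> 0<=rho -> 0<=r<=1 -> a = b ->
  D <= a+b -> a*b <= (1+rho)*r -> rho^2 <= D^2+4 ->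
  rho <= 6 /\ D^2 <= 4*(1+rho)*r.
Proof.
  intros Ha HD Hrho Hr Hab H1 H2 H3. subst b.
  assert (HD2 : D^2 <= 4*(1+rho)*r) by nra.
  split; [|exact HD2]. nra.
Qed.

Lemma bad_case a b D rho r : 0<=a -> 0<=b -> 0<D -> 0<=rho -> 0<=r ->
  b <= a -> a*b <= (1+rho)*r -> a <= b + D -> rho <= 6 -> D^2 <= 28*r ->
  a <= 60*((1+/D)*r) /\ a*a <= 144*r.
Proof.
  intros Ha Hb HD Hrho Hr H1 H2 H3 H4 H5.
  assert (Hb2 : b*b <= 7*r) by nra.
  assert (a*a <= (b+D)*(b+D)) by nra. assert ((b+D)*(b+D) <= 2*(b*b) + 2*(D^2)) by (pose proof (Rle_0_sqr (b-D)); unfold Rsqr in *; nra).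
  assert (Ha2 : a*a <= 70*r) by lra.
  split; [|lra].
  assert (Hsq : (a*D)*(a*D) <= (60*r)*(60*r)) by nra.
  assert (HaD : a*D <= 60*r).
  { destruct (Rle_lt_dec (a*D) (60*r)); [assumption|]. nra. }
  apply div_bound; try lra; nra.
Qed.

Lemma top_lemma a b D rho r : 0<=a -> 0<=b -> 0<=D -> 0<=rho -> 0<=r<=1 ->
  b < a -> 3 < b -> a*b <= (1+rho)*r -> D <= a+b -> rho^2 <= D^2+4 -> False.
Proof.
  intros Ha Hb HD Hrho Hr H1 H2 H3 H4 H5.
  assert (Hp : a*b <= 1+rho) by nra.
  assert (H9 : 9 < 1 + rho) by nra.
  assert (H6 : 3*D <= 2*(1+rho)) by nra.
  assert (H7 : 9*D^2 <= 4*(1+rho)^2) by nra.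
  nra.
Qed.

Lemma final_comb a X r : 0 <= a -> 0 <= r -> a <= 60 * X -> a*a <= 144*r ->
  a <= 60 * Rmin X (sqrt r).
Proof.
  intros Ha Hr H1 H2.
  assert (a <= 12 * sqrt r).
  { rewrite <- (sqrt_square a) by lra. replace (12 * sqrt r) with (sqrt (144 * r)).
    - apply sqrt_le_1; nra.
    - rewrite sqrt_mult by lra. replace 144 with (12*12) by ring. rewrite sqrt_square; lra. }
  pose proof (sqrt_pos r).
  unfold Rmin; destruct (Rle_dec X (sqrt r)); lra.
Qed.

Lemma cp_const c x : continuity_pt (fun _ => c) x.
Proof. apply continuity_pt_const. intros a b; reflexivity. Qed.
Lemma cp_id x : continuity_pt (fun t => t) x.
Proof. apply continuity_pt_id. Qed.
Lemma cp_plus f g x : continuity_pt f x -> continuity_pt g x -> continuity_pt (fun t => f t + g t) x.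
Proof. intros; apply continuity_pt_plus; auto. Qed.
Lemma cp_minus f g x : continuity_pt f x -> continuity_pt g x -> continuity_pt (fun t => f t - g t) x.
Proof. intros; apply continuity_pt_minus; auto. Qed.
Lemma cp_mult f g x : continuity_pt f x -> continuity_pt g x -> continuity_pt (fun t => f t * g t) x.
Proof. intros; apply continuity_pt_mult; auto. Qed.
Lemma cp_opp f x : continuity_pt f x -> continuity_pt (fun t => - f t) x.
Proof. intros; apply continuity_pt_opp; auto. Qed.
Lemma cp_div f c x : continuity_pt f x -> continuity_pt (fun t => f t / c) x.
Proof. intros. unfold Rdiv. apply cp_mult; [auto|apply cp_const]. Qed.
Lemma cp_pow f n x : continuity_pt f x -> continuity_pt (fun t => f t ^ n) x.
Proof. intros H. apply (continuity_pt_comp f (fun y => y ^ n)); [auto|]. apply derivable_continuous_pt, derivable_pt_pow. Qed.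
Lemma cp_sqrt f x : continuity_pt f x -> continuity_pt (fun t => sqrt (f t)) x.
Proof. intros H. apply (continuity_pt_comp f sqrt); [auto|]. apply continuity_pt_filterlim, continuous_sqrt. Qed.

Lemma s_line_cont (s : C -> C) E t0 :
  0 < t0 ->
  filterlim s (within (fun w : C => 0 < Im w) (locally (E,t0))) (locally (s (E,t0))) ->
  filterlim (fun t => s (E,t)) (locally t0) (locally (s (E,t0))).
Proof.
  intros Ht Hc P HP. specialize (Hc P HP).
  destruct Hc as [eps He].
  assert (Hp : 0 < Rmin eps t0) by (apply Rmin_pos; [apply cond_pos|lra]).
  exists (mkposreal _ Hp). intros t Hb. apply He.
  - split; simpl.
    + apply ball_center.
    + apply Rlt_le_trans with (1 := Hb). apply Rmin_l.
  - simpl. unfold ball in Hb; simpl in Hb. unfold AbsRing_ball, abs, minus, plus, opp in Hb. simpl in Hb.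
    pose proof (Rmin_r eps t0). apply Rabs_def2 in Hb. lra.
Qed.

Lemma fst_cont_C (f : R -> C) t0 :
  filterlim f (locally t0) (locally (f t0)) ->
  continuity_pt (fun t => fst (f t)) t0.
Proof.
  intros H. apply continuity_pt_filterlim.
  intros P [eps HP]. apply (H (fun c => P (fst c))). exists eps. intros y [H1 H2]. apply HP. exact H1.
Qed.
Lemma snd_cont_C (f : R -> C) t0 :
  filterlim f (locally t0) (locally (f t0)) ->
  continuity_pt (fun t => snd (f t)) t0.
Proof.
  intros H. apply continuity_pt_filterlim.
  intros P [eps HP]. apply (H (fun c => P (snd c))). exists eps. intros y [H1 H2]. apply HP. exact H2.
Qed.

Definition G (s : C -> C) E t :=
  Cmod (Cminus (s (E,t)) (Mx' E t)) - Cmod (Cminus (s (E,t)) (Mx E t)).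

Lemma G_cont (s : C -> C) E t0 : 0 < t0 ->
  filterlim s (within (fun w : C => 0 < Im w) (locally (E,t0))) (locally (s (E,t0))) ->
  continuity_pt (G s E) t0.
Proof.
  intros Ht Hc. pose proof (s_line_cont s E t0 Ht Hc) as Hl.
  pose proof (fst_cont_C _ _ Hl) as H1. pose proof (snd_cont_C _ _ Hl) as H2.
  simpl in H1, H2.
  unfold G, Cmod, Mx, Mx', W1, W2, sq1, sq2, Cminus, Cplus, Copp; simpl.
  repeat first [ assumption | apply cp_const | apply cp_id | apply cp_sqrt | apply cp_plus
    | apply cp_minus | apply cp_mult | apply cp_opp | apply cp_pow | apply cp_div ].
Qed.

Theorem lemma5p6 :
  exists K : R, 0 < K /\
  forall (s : C -> C) (E eta0 eta1 : R) (r : R -> R),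
    (forall z : C, 0 < Im z -> 0 < Im (s z)) ->
    (forall z : C, 0 < Im z ->
       filterlim s (within (fun w : C => 0 < Im w) (locally z)) (locally (s z))) ->
    0 < eta0 ->
    Rmax 3 eta0 <= eta1 ->
    (forall eta, eta0 <= eta <= eta1 -> 0 <= r eta <= 1) ->
    (forall x y, eta0 <= x -> x <= y -> y <= eta1 -> r y <= r x) ->
    (forall eta, eta0 <= eta <= eta1 ->
       filterlim r (within (fun x => eta0 <= x <= eta1) (locally eta))
                   (locally (r eta))) ->
    (forall eta, eta0 <= eta <= eta1 ->
       Cmod (Cplus (Cplus (Cmult (s (E, eta)) (s (E, eta)))
                          (Cmult (s (E, eta)) (E, eta))) (RtoC 1))
       <= (1 + Cmod (E, eta)) * r eta) ->
    forall eta, eta0 <= eta <= eta1 ->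
      Cmod (Cminus (s (E, eta)) (m_sc (E, eta))) <= K * F_z (E, eta) (r eta).
Proof.
  exists 60. split; [lra|].
  intros s E eta0 eta1 r Hs Hsc Heta0 Heta1 Hr Hmono _ HR eta Heta.
  assert (H3 : 3 <= eta1) by (eapply Rle_trans; [apply Rmax_l|exact Heta1]).
  set (a := fun t => Cmod (Cminus (s (E,t)) (Mx E t))).
  set (b := fun t => Cmod (Cminus (s (E,t)) (Mx' E t))).
  set (rho := fun t => Cmod (E,t)).
  assert (Hpt : forall t, eta0 <= t <= eta1 ->
    0 <= a t /\ 0 <= b t /\ 0 < Dv E t /\ 0 <= rho t /\ 0 <= r t <= 1 /\
    Dv E t <= a t + b t /\ a t <= b t + Dv E t /\ t < b t /\
    a t * b t <= (1 + rho t) * r t /\ rho t ^ 2 <= Dv E t ^ 2 + 4).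
  { intros t Ht. assert (Ht0 : 0 < t) by lra.
    destruct (point_facts (s (E,t)) E t Ht0) as [F1 [F2 [F3 F4]]].
    destruct (rho_facts E t) as [_ [F5 _]].
    unfold a, b, rho. repeat split.
    - apply Cmod_ge_0.
    - apply Cmod_ge_0.
    - apply Dv_pos; lra.
    - apply Cmod_ge_0.
    - apply Hr; lra.
    - apply Hr; lra.
    - exact F2.
    - exact F3.
    - apply F4. apply (Hs (E,t)). simpl; lra.
    - rewrite <- F1. apply HR. lra.
    - exact F5. }
  rewrite m_sc_eq by lra. fold (Mx E eta). fold (a eta).
  unfold F_z. fold (Dv E eta).
  destruct (Hpt eta Heta) as [Ha [Hb [HD [Hrho [Hr01 [T1 [T2 [T3 [T4 T5]]]]]]]]].
  cut (a eta <= 60 * ((1 + / Dv E eta) * r eta) /\ a eta * a eta <= 144 * r eta).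
  { intros [P Q]. apply final_comb; lra. }
  destruct (Rle_lt_dec (a eta) (b eta)) as [Hgood|Hbad].
  - destruct (good_case (a eta) (b eta) (Dv E eta) (rho eta) (r eta) Ha Hb HD Hrho Hr01 T1 T4 Hgood T5) as [G1 G2].
    split; [|exact G2].
    assert (0 <= (1 + / Dv E eta) * r eta).
    { apply Rmult_le_pos; [|lra]. pose proof (Rinv_0_lt_compat _ HD). lra. }
    lra.
  -
    assert (He1 : eta0 <= eta1 <= eta1) by lra.
    assert (Htop : a eta1 <= b eta1).
    { destruct (Rle_lt_dec (a eta1) (b eta1)) as [|Hc]; [assumption|exfalso].
      destruct (Hpt eta1 He1) as [A1 [B1 [C1 [D1 [E1 [F1 [_ [H1 [I1 J1]]]]]]]]].
      apply (top_lemma (a eta1) (b eta1) (Dv E eta1) (rho eta1) (r eta1)); try (split; lra); lra. }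
    assert (Hsw : exists ts, eta <= ts <= eta1 /\ a ts = b ts).
    { destruct (Req_dec (a eta1) (b eta1)) as [Heq|Hne].
      - exists eta1. split; [lra|exact Heq].
      - assert (Hlt : eta < eta1).
        { destruct (Req_dec eta eta1) as [Hee|]; [|lra]. subst eta. lra. }
        destruct (Ranalysis5.IVT_interv (G s E) eta eta1) as [ts [Hts Hg]].
        + intros x Hx. apply G_cont; [lra|]. apply Hsc. simpl; lra.
        + exact Hlt.
        + unfold G. fold (a eta) (b eta). lra.
        + unfold G. fold (a eta1) (b eta1). lra.
        + exists ts. split; [exact Hts|]. unfold G in Hg. fold (a ts) (b ts) in Hg. lra. }
    destruct Hsw as [ts [Hts Hab]].
    assert (Hts' : eta0 <= ts <= eta1) by lra.
    destruct (Hpt ts Hts') as [A1 [B1 [C1 [D1 [E1 [F1 [_ [_ [I1 J1]]]]]]]]].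
    destruct (switch_lemma (a ts) (b ts) (Dv E ts) (rho ts) (r ts) A1 (Rlt_le _ _ C1) D1 E1 Hab F1 I1 J1) as [S1 S2].
    assert (Hrm : r ts <= r eta) by (apply Hmono; lra).
    assert (Hrh : rho eta <= rho ts) by (unfold rho; apply Cmod_pair_mono; lra).
    assert (HDm : Dv E eta <= Dv E ts) by (apply Dv_mono; lra).
    assert (HD2 : Dv E eta ^ 2 <= 28 * r eta).
    { assert (Dv E eta ^ 2 <= Dv E ts ^ 2) by (apply pow_incr; lra). nra. }
    destruct (bad_case (a eta) (b eta) (Dv E eta) (rho eta) (r eta) Ha Hb HD Hrho (proj1 Hr01) (Rlt_le _ _ Hbad) T4 T2 ltac:(lra) HD2) as [G1 G2].
    split; assumption.
Qed.
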